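(* For real $\alpha,\beta$, the inequalities $H_{\alpha }(\cosh x) <\frac{\sinh x}{x}<H_{\beta }(\cosh x)$ hold for all $x\in(0,\infty)$ if and only if $\alpha \leq 0$ and $\beta \geq 3/5$.
   Context: For $t>0$ define $H_{r}(t) =\left( \frac{\sqrt{8+t^{2r}}+t^{r}}{4}\right) ^{1/r}$ if $r\neq 0$ and $H_{0}(t) =t^{1/3}$. *)

(* Defs.v *)
From Stdlib Require Import Reals.
Open Scope R_scope.

Definition H (r t : R) : R :=
  if Req_EM_T r 0 then Rpower t (1/3)
  else Rpower ((sqrt (8 + Rpower t (2*r)) + Rpower t r) / 4) (1/r).

(* Main.v *)
Require Import Defs.
From Stdlib Require Import Reals.
Open Scope R_scope.
From Coquelicot Require Import Coquelicot.
From Stdlib Require Import Lra Lia List Factorial.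

Fixpoint FF (j n : nat) : R :=
  match j with O => 1 | S j' => INR n * FF j' (pred n) end.

Definition ce (j : nat) (k : R) (n : nat) : R :=
  FF j n * k ^ (n - j) / INR (fact n).

Lemma ser_exp (x : R) : is_series (fun n => x ^ n / INR (fact n)) (exp x).
Proof.
  generalize (is_exp_Reals x). unfold is_pseries.
  apply is_series_ext. intros n. rewrite pow_n_pow. unfold scal; simpl.
  unfold mult; simpl. unfold Rdiv. ring.
Qed.

Lemma ser_term (j : nat) (k y : R) :
  is_series (fun n => ce j k n * y ^ n) (y ^ j * exp (k * y)).
Proof.
  induction j as [|j IH].
  - eapply is_series_ext; [|rewrite pow_O, Rmult_1_l; apply (ser_exp (k*y))].
    intros n. unfold ce. simpl. rewrite Nat.sub_0_r, Rpow_mult_distr. unfold Rdiv. ring.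
  - apply is_series_decr_1.
    assert (H0 : ce (S j) k 0 * y ^ 0 = 0) by (unfold ce; simpl FF; rewrite Rmult_0_l; unfold Rdiv; ring).
    rewrite H0.
    assert (H1 : is_series (fun n => ce (S j) k (S n) * y ^ (S n)) (scal y (y ^ j * exp (k * y)))).
    { eapply is_series_ext; [|apply (is_series_scal_l y _ _ IH)].
      intros n. unfold scal; simpl; unfold mult; simpl. unfold ce.
      change (FF (S j) (S n)) with (INR (S n) * FF j n).
      simpl (S n - S j)%nat. rewrite fact_simpl, mult_INR.
      assert (0 < INR (fact n)) by apply INR_fact_lt_0.
      assert (0 < INR (S n)) by apply lt_0_INR, Nat.lt_0_succ.
      simpl pow. field. lra. }
    revert H1. unfold scal, plus, opp; simpl. unfold mult, plus, opp; simpl.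
    rewrite Ropp_0, Rplus_0_r. simpl. intros H1.
    replace (y * y ^ j * exp (k * y)) with (y * (y ^ j * exp (k * y))) by ring. exact H1.
Qed.

Definition term := (R * nat * R)%type.
Definition Fsum (l : list term) (y : R) : R :=
  fold_right (fun t acc => match t with (a, j, k) => a * (y ^ j * exp (k * y)) + acc end) 0 l.
Definition Dsum (l : list term) (n : nat) : R :=
  fold_right (fun t acc => match t with (a, j, k) => a * (FF j n * k ^ (n - j)) + acc end) 0 l.

Lemma ser_list (l : list term) (y : R) :
  is_series (fun n => Dsum l n / INR (fact n) * y ^ n) (Fsum l y).
Proof.
  induction l as [|[[a j] k] l IH].
  - simpl. generalize (is_series_scal_l 0 _ _ (ser_exp 0)). unfold scal; simpl; unfold mult; simpl.
    rewrite Rmult_0_l. apply is_series_ext. intros n; simpl. unfold Rdiv; ring.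
  - simpl. eapply is_series_ext; [|apply (is_series_plus _ _ _ _ (is_series_scal_l a _ _ (ser_term j k y)) IH)].
    intros n. unfold plus, scal; simpl; unfold mult; simpl. unfold ce.
    assert (0 < INR (fact n)) by apply INR_fact_lt_0. field. lra.
Qed.

Lemma sum_n_nonneg (a : nat -> R) N : (forall n, 0 <= a n) -> 0 <= sum_n a N.
Proof.
  intros Hp; induction N. rewrite sum_O; apply Hp.
  rewrite sum_Sn; unfold plus; simpl. specialize (Hp (S N)). lra.
Qed.

Lemma sum_n_mono (a : nat -> R) N n : (forall n, 0 <= a n) -> (N <= n)%nat -> sum_n a N <= sum_n a n.
Proof.
  intros Hp Hn. induction Hn. lra.
  rewrite sum_Sn; unfold plus; simpl. specialize (Hp (S m)). lra.
Qed.

Lemma series_ge_partial (a : nat -> R) (L : R) (N : nat) :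
  is_series a L -> (forall n, 0 <= a n) -> sum_n a N <= L.
Proof.
  intros Hs Hp.
  assert (Hl : is_lim_seq (sum_n a) L) by exact Hs.
  assert (Hc : is_lim_seq (fun _ => sum_n a N) (sum_n a N)) by apply is_lim_seq_const.
  assert (Hev : eventually (fun n => sum_n a N <= sum_n a n)).
  { exists N. intros n Hn. apply sum_n_mono; auto. }
  exact (is_lim_seq_le_loc _ _ _ _ Hev Hc Hl).
Qed.

Lemma Dpos_Fpos (l : list term) (y : R) (m : nat) :
  0 < y -> (forall n, 0 <= Dsum l n) -> 0 < Dsum l m -> 0 < Fsum l y.
Proof.
  intros Hy Hn Hm.
  assert (Ha : forall n, 0 <= Dsum l n / INR (fact n) * y ^ n).
  { intros n. apply Rmult_le_pos; [|apply pow_le; lra].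
    apply Rdiv_le_0_compat; [apply Hn| apply INR_fact_lt_0]. }
  assert (H := series_ge_partial _ _ m (ser_list l y) Ha).
  assert (Hm' : 0 < Dsum l m / INR (fact m) * y ^ m).
  { apply Rmult_lt_0_compat; [|apply pow_lt; lra].
    apply Rdiv_lt_0_compat; [apply Hm| apply INR_fact_lt_0]. }
  destruct m as [|m].
  - rewrite sum_O in H. lra.
  - set (a := fun n => Dsum l n / INR (fact n) * y ^ n) in *.
    assert (E : sum_n a (S m) = sum_n a m + (Dsum l (S m) / INR (fact (S m)) * y ^ S m)) by (rewrite sum_Sn; reflexivity).
    assert (H2 := sum_n_nonneg _ m Ha). fold a in H2. lra.
Qed.

Lemma Dnn_Fnn (l : list term) (y : R) :
  0 <= y -> (forall n, 0 <= Dsum l n) -> 0 <= Fsum l y.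
Proof.
  intros Hy Hn.
  assert (Ha : forall n, 0 <= Dsum l n / INR (fact n) * y ^ n).
  { intros n. apply Rmult_le_pos; [|apply pow_le; lra].
    apply Rdiv_le_0_compat; [apply Hn| apply INR_fact_lt_0]. }
  assert (H := series_ge_partial _ _ 0 (ser_list l y) Ha).
  assert (H2 := sum_n_nonneg _ 0 Ha). lra.
Qed.

Lemma FF_S (j n : nat) : FF (S j) n = FF j n * (INR n - INR j).
Proof.
  revert n; induction j as [|j IH]; intros n.
  - simpl. ring.
  - change (FF (S (S j)) n) with (INR n * FF (S j) (pred n)).
    rewrite IH. change (FF (S j) n) with (INR n * FF j (pred n)).
    destruct n as [|n]. simpl. ring.
    simpl pred. rewrite !S_INR. ring.
Qed.

Lemma FF_0 n : FF 0 n = 1.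
Proof. reflexivity. Qed.

Lemma pow0_sub (j n : nat) : (j < n)%nat -> 0 ^ (n - j) = 0.
Proof. intros H. apply pow_i. lia. Qed.

Lemma pow_sub_k (k : R) (j n : nat) : (j <= n)%nat -> k <> 0 -> k ^ (n - j) = k ^ n / k ^ j.
Proof.
  intros H Hk. replace n with ((n - j) + j)%nat at 2 by lia. rewrite pow_add.
  field. apply pow_nonzero; auto.
Qed.

Lemma pow_neg (k : R) n : (- k) ^ n = (-1) ^ n * k ^ n.
Proof. rewrite <- Rpow_mult_distr. f_equal. ring. Qed.

Lemma pow_m1_parity n : ((-1) ^ n = 1 /\ Nat.Even n) \/ ((-1) ^ n = -1 /\ Nat.Odd n).
Proof.
  destruct (Nat.Even_or_Odd n) as [[q Hq]|[q Hq]]; subst.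
  - left. split. apply pow_1_even. exists q; auto.
  - right. split. replace (2 * q + 1)%nat with (S (2 * q)) by lia. apply pow_1_odd. exists q; auto.
Qed.

Definition l_I7 : list term := ((-1/2), 0%nat, (Ropp 1)) :: ((-1), 1%nat, (0)) :: ((-1/6), 3%nat, (0)) :: ((1/2), 0%nat, (1)) :: nil.
Definition l_I5 : list term := ((1/2), 0%nat, (Ropp 1)) :: ((1/2), 1%nat, (Ropp 1)) :: ((-1/3), 3%nat, (0)) :: ((-1/2), 0%nat, (1)) :: ((1/2), 1%nat, (1)) :: nil.
Definition l_I3 : list term := ((1/2), 0%nat, (Ropp 1)) :: ((-1), 0%nat, (0)) :: ((-1/2), 2%nat, (0)) :: ((1/2), 0%nat, (1)) :: nil.
Definition l_I4 : list term := ((-1/2), 0%nat, (Ropp 1)) :: ((1/4), 2%nat, (Ropp 1)) :: ((1), 0%nat, (0)) :: ((-1/2), 0%nat, (1)) :: ((1/4), 2%nat, (1)) :: nil.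
Definition l_I6 : list term := ((-1/2), 0%nat, (Ropp 1)) :: ((-1/2), 1%nat, (Ropp 1)) :: ((1/6), 3%nat, (Ropp 1)) :: ((1/2), 0%nat, (1)) :: ((-1/2), 1%nat, (1)) :: ((1/6), 3%nat, (1)) :: nil.
Definition l_I8 : list term := ((1/2), 0%nat, (Ropp 1)) :: ((1/12), 3%nat, (Ropp 1)) :: ((1), 1%nat, (0)) :: ((-1/2), 0%nat, (1)) :: ((1/12), 3%nat, (1)) :: nil.
Definition l_I9 : list term := ((3/2), 0%nat, (Ropp 1)) :: ((1/2), 1%nat, (Ropp 1)) :: ((2), 1%nat, (0)) :: ((-1/60), 5%nat, (0)) :: ((-3/2), 0%nat, (1)) :: ((1/2), 1%nat, (1)) :: nil.
Definition l_I10 : list term := ((-1/2), 0%nat, (Ropp 1)) :: ((1/48), 4%nat, (Ropp 1)) :: ((1), 0%nat, (0)) :: ((1/2), 2%nat, (0)) :: ((-1/2), 0%nat, (1)) :: ((1/48), 4%nat, (1)) :: nil.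
Definition l_I11 : list term := ((-1/8), 0%nat, (Ropp 3)) :: ((3/8), 0%nat, (Ropp 1)) :: ((-1/2), 3%nat, (Ropp 1)) :: ((-3/8), 0%nat, (1)) :: ((-1/2), 3%nat, (1)) :: ((1/8), 0%nat, (3)) :: nil.
Definition l_f : list term := ((-3/4), 0%nat, (Ropp 3)) :: ((-7/4), 1%nat, (Ropp 3)) :: ((-3/8), 2%nat, (Ropp 3)) :: ((-1), 1%nat, (Ropp 2)) :: ((-7/4), 2%nat, (Ropp 2)) :: ((1/2), 3%nat, (Ropp 2)) :: ((9/4), 0%nat, (Ropp 1)) :: ((7/4), 1%nat, (Ropp 1)) :: ((-35/8), 2%nat, (Ropp 1)) :: ((-3/2), 3%nat, (Ropp 1)) :: ((2), 1%nat, (0)) :: ((-4), 3%nat, (0)) :: ((-9/4), 0%nat, (1)) :: ((7/4), 1%nat, (1)) :: ((35/8), 2%nat, (1)) :: ((-3/2), 3%nat, (1)) :: ((-1), 1%nat, (2)) :: ((7/4), 2%nat, (2)) :: ((1/2), 3%nat, (2)) :: ((3/4), 0%nat, (3)) :: ((-7/4), 1%nat, (3)) :: ((3/8), 2%nat, (3)) :: nil.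

Ltac dsmall := cbv [Dsum fold_right]; simpl; lra.
Ltac dgen m :=
  cbv [Dsum fold_right];
  rewrite ?pow0_sub by lia;
  rewrite ?(pow_sub_k _ _ m) by (lia || (intro; lra));
  rewrite ?pow_neg, ?pow1, ?FF_S, ?FF_0;
  simpl pow; simpl INR;
  destruct (pow_m1_parity m) as [[-> _]|[-> _]].

Ltac dbig n k :=
  let m := fresh "m" in
  set (m := S _) ;
  assert (Hmn : (k <= m)%nat) by (unfold m; lia);
  assert (Hm : INR k <= INR m) by (apply le_INR; exact Hmn);
  clearbody m; simpl INR in Hm.

Lemma D_I7 n : 0 <= Dsum l_I7 n.
Proof.
  do 4 (destruct n as [|n]; [dsmall|]).
  dbig n 4%nat. unfold l_I7. dgen m; lra.
Qed.

Lemma D_I5 n : 0 <= Dsum l_I5 n.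
Proof. do 4 (destruct n as [|n]; [dsmall|]). dbig n 4%nat. unfold l_I5. dgen m; nra. Qed.
Lemma D_I3 n : 0 <= Dsum l_I3 n.
Proof. do 3 (destruct n as [|n]; [dsmall|]). dbig n 3%nat. unfold l_I3. dgen m; nra. Qed.
Lemma D_I4 n : 0 <= Dsum l_I4 n.
Proof. do 3 (destruct n as [|n]; [dsmall|]). dbig n 3%nat. unfold l_I4. dgen m; nra. Qed.
Lemma D_I6 n : 0 <= Dsum l_I6 n.
Proof. do 4 (destruct n as [|n]; [dsmall|]). dbig n 4%nat. unfold l_I6. dgen m; nra. Qed.
Lemma D_I8 n : 0 <= Dsum l_I8 n.
Proof. do 4 (destruct n as [|n]; [dsmall|]). dbig n 4%nat. unfold l_I8. dgen m; nra. Qed.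
Lemma D_I9 n : 0 <= Dsum l_I9 n.
Proof. do 6 (destruct n as [|n]; [dsmall|]). dbig n 6%nat. unfold l_I9. dgen m; nra. Qed.
Lemma D_I10 n : 0 <= Dsum l_I10 n.
Proof. do 5 (destruct n as [|n]; [dsmall|]). dbig n 5%nat. unfold l_I10. dgen m; nra. Qed.

Lemma pow3_bound m : (5 <= m)%nat -> 4 * INR m * (INR m - 1) * (INR m - 2) + 3 <= 3 ^ m.
Proof.
  intros H. induction H.
  - simpl. lra.
  - rewrite S_INR. simpl pow. 
    assert (5 <= INR m) by (apply (le_INR 5) in H; simpl in H; lra). nra.
Qed.

Lemma D_I11 n : 0 <= Dsum l_I11 n.
Proof.
  do 6 (destruct n as [|n]; [dsmall|]). dbig n 6%nat. unfold l_I11.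
  assert (H3 := pow3_bound m ltac:(lia)).
  dgen m; nra.
Qed.

Lemma D_f n : 0 <= Dsum l_f n.
Proof.
  do 15 (destruct n as [|n]; [dsmall|]). dbig n 15%nat. unfold l_f.
  assert (H2 : 2 ^ 15 <= 2 ^ m) by (apply Rle_pow; lra || lia).
  assert (H3 : 0 <= 3 ^ m) by (apply pow_le; lra).
  simpl in H2. 
  assert (A1 : 0 <= 3 ^ m * (INR m * INR m - 15 * INR m + 18)) by (apply Rmult_le_pos; nra).
  assert (A2 : 24 * (INR m * (INR m * INR m + 4 * INR m - 13)) <= 2 ^ m * (INR m * (INR m * INR m + 4 * INR m - 13)))
    by (apply Rmult_le_compat_r; nra).
  assert (A3 : 0 <= 3 * INR m * (7 * INR m - 15) + 35 * INR m * (INR m - 1) / 4 + 7 * INR m / 2 - 9 / 2) by nra.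
  dgen m; lra.
Qed.

Lemma e1 y : exp (1 * y) = exp y. Proof. f_equal; ring. Qed.
Lemma e0 y : exp (0 * y) = 1. Proof. rewrite Rmult_0_l; apply exp_0. Qed.
Lemma e2 y : exp (2 * y) = exp y ^ 2. Proof. replace (2*y) with (y+y) by ring. rewrite exp_plus; ring. Qed.
Lemma e3 y : exp (3 * y) = exp y ^ 3. Proof. replace (3*y) with (y+y+y) by ring. rewrite !exp_plus; ring. Qed.
Lemma em1 y : exp (Ropp 1 * y) = / exp y. Proof. replace (Ropp 1*y) with (-y) by ring. apply exp_Ropp. Qed.
Lemma em2 y : exp (Ropp 2 * y) = / exp y ^ 2. Proof. replace (Ropp 2*y) with (-(2*y)) by ring. rewrite exp_Ropp, e2. field. apply Rgt_not_eq, exp_pos. Qed.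
Lemma em3 y : exp (Ropp 3 * y) = / exp y ^ 3. Proof. replace (Ropp 3*y) with (-(3*y)) by ring. rewrite exp_Ropp, e3. field. apply Rgt_not_eq, exp_pos. Qed.

Ltac fsum_id l :=
  cbv [Fsum fold_right l]; unfold sinh, cosh; rewrite ?e0, ?e1, ?e2, ?e3, ?em1, ?em2, ?em3, ?exp_Ropp;
  field; apply Rgt_not_eq, exp_pos.

Lemma F_I7 y : Fsum l_I7 y = sinh y - y - y^3/6. Proof. fsum_id l_I7. Qed.
Lemma F_I5 y : Fsum l_I5 y = y * cosh y - sinh y - y^3/3. Proof. fsum_id l_I5. Qed.
Lemma F_I3 y : Fsum l_I3 y = cosh y - 1 - y^2/2. Proof. fsum_id l_I3. Qed.
Lemma F_I4 y : Fsum l_I4 y = y^2 * cosh y / 2 - cosh y + 1. Proof. fsum_id l_I4. Qed.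
Lemma F_I6 y : Fsum l_I6 y = y^3 * cosh y / 3 - y * cosh y + sinh y. Proof. fsum_id l_I6. Qed.
Lemma F_I8 y : Fsum l_I8 y = y^3 * cosh y / 6 - sinh y + y. Proof. fsum_id l_I8. Qed.
Lemma F_I9 y : Fsum l_I9 y = y * cosh y - 3 * sinh y + 2 * y - y^5/60. Proof. fsum_id l_I9. Qed.
Lemma F_I10 y : Fsum l_I10 y = y^4 * cosh y / 24 - cosh y + 1 + y^2/2. Proof. fsum_id l_I10. Qed.
Lemma F_I11 y : Fsum l_I11 y = sinh y ^ 3 - y^3 * cosh y. Proof. fsum_id l_I11. Qed.
Definition fN y := y * cosh y - sinh y.
Definition fM y := sinh y - y.
Definition ff y := 3 * (y * (cosh y + 1) - 2 * sinh y) * fN y * fM y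
   - 5 * y * sinh y * (y * sinh y * fM y - fN y * (cosh y - 1)).
Lemma F_f y : Fsum l_f y = ff y. Proof. unfold ff, fN, fM. fsum_id l_f. Qed.

Ltac dpos_tac l m := cbv [Dsum fold_right l]; simpl; lra.

Lemma ineq_I7 y : 0 < y -> y^3/6 < sinh y - y.
Proof. intros Hy. generalize (Dpos_Fpos l_I7 y 5 Hy D_I7 ltac:(dpos_tac l_I7 5)). rewrite F_I7; lra. Qed.
Lemma ineq_I5 y : 0 < y -> y^3/3 < y * cosh y - sinh y.
Proof. intros Hy. generalize (Dpos_Fpos l_I5 y 5 Hy D_I5 ltac:(dpos_tac l_I5 5)). rewrite F_I5; lra. Qed.
Lemma ineq_I3 y : 0 < y -> y^2/2 < cosh y - 1.
Proof. intros Hy. generalize (Dpos_Fpos l_I3 y 4 Hy D_I3 ltac:(dpos_tac l_I3 4)). rewrite F_I3; lra. Qed.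
Lemma ineq_I4 y : 0 <= y -> cosh y - 1 <= y^2 * cosh y / 2.
Proof. intros Hy. generalize (Dnn_Fnn l_I4 y Hy D_I4). rewrite F_I4; lra. Qed.
Lemma ineq_I6 y : 0 <= y -> y * cosh y - sinh y <= y^3 * cosh y / 3.
Proof. intros Hy. generalize (Dnn_Fnn l_I6 y Hy D_I6). rewrite F_I6; lra. Qed.
Lemma ineq_I8 y : 0 <= y -> sinh y - y <= y^3 * cosh y / 6.
Proof. intros Hy. generalize (Dnn_Fnn l_I8 y Hy D_I8). rewrite F_I8; lra. Qed.
Lemma ineq_I9 y : 0 <= y -> y^5/60 <= y * cosh y - 3 * sinh y + 2 * y.
Proof. intros Hy. generalize (Dnn_Fnn l_I9 y Hy D_I9). rewrite F_I9; lra. Qed.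
Lemma ineq_I10 y : 0 <= y -> cosh y - 1 - y^2/2 <= y^4 * cosh y / 24.
Proof. intros Hy. generalize (Dnn_Fnn l_I10 y Hy D_I10). rewrite F_I10; lra. Qed.
Lemma ineq_I11 y : 0 < y -> y^3 * cosh y < sinh y ^ 3.
Proof. intros Hy. generalize (Dpos_Fpos l_I11 y 7 Hy D_I11 ltac:(dpos_tac l_I11 7)). rewrite F_I11; lra. Qed.
Lemma ineq_f y : 0 < y -> 0 < ff y.
Proof. intros Hy. generalize (Dpos_Fpos l_f y 11 Hy D_f ltac:(dpos_tac l_f 11)). rewrite F_f; lra. Qed.

Lemma ln_le_sub1 x : 0 < x -> ln x <= x - 1.
Proof. intros Hx. generalize (exp_ineq1_le (ln x)). rewrite exp_ln by lra. lra. Qed.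

Lemma ln_pos' x : 1 <= x -> 0 <= ln x.
Proof. intros H. rewrite <- ln_1. destruct (Req_dec x 1). subst; lra. apply Rlt_le, ln_increasing; lra. Qed.

Lemma right_lim_incr (f df : R -> R) (a b L : R) :
  a < b ->
  (forall t, a < t <= b -> is_derive f t (df t)) ->
  (forall t, a < t < b -> 0 < df t) ->
  (forall eps, 0 < eps -> exists delta, 0 < delta /\ forall t, a < t < a + delta -> Rabs (f t - L) < eps) ->
  L < f b.
Proof.
  intros Hab Hd Hpos Hlim.
  assert (Hmvt : forall u v, a < u -> u < v -> v <= b -> f u < f v).
  { intros u v Hu Huv Hv.
    destruct (MVT_cor2 f df u v Huv) as [c [Hc1 Hc2]].
    - intros c Hc. apply is_derive_Reals. apply Hd. lra.
    - assert (0 < df c) by (apply Hpos; lra).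
      assert (0 < df c * (v - u)) by (apply Rmult_lt_0_compat; lra). lra. }
  set (c := (a + b) / 2).
  assert (HL : L <= f c).
  { destruct (Rle_or_lt L (f c)) as [H|H]; auto.
    destruct (Hlim (L - f c) ltac:(lra)) as [d [Hd0 Hd1]].
    set (s := a + Rmin d (c - a) / 2).
    assert (Hm1 : 0 < Rmin d (c - a)) by (apply Rmin_pos; unfold c; lra).
    assert (Hm2 : Rmin d (c - a) <= d) by apply Rmin_l.
    assert (Hm3 : Rmin d (c - a) <= c - a) by apply Rmin_r.
    specialize (Hd1 s ltac:(unfold s; lra)).
    assert (f s < f c) by (apply Hmvt; unfold s, c in *; lra).
    apply Rabs_def2 in Hd1. lra. }
  assert (f c < f b) by (apply Hmvt; unfold c; lra). lra.
Qed.

Definition Ajf y := 2 * (cosh y - 1) / y^2.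
Definition Bjf y := fN y / (2 * fM y).
Definition Jf y := 3/5 * ln (Ajf y) - ln (Bjf y).

Lemma Jf_derive t : 0 < t -> 0 < cosh t - 1 -> 0 < fN t -> 0 < fM t -> 0 < sinh t ->
  is_derive Jf t (ff t / (5 * t * sinh t * fN t * fM t)).
Proof.
  intros Ht HC HN HM HS.
  unfold Jf, Ajf, Bjf, ff. unfold fN, fM in *. unfold cosh, sinh in *.
  auto_derive.
  - repeat split; try (intro; nra);
    (apply Rmult_lt_0_compat; [|apply Rinv_0_lt_compat]); nra.
  - rewrite exp_Ropp in *. set (u := exp t) in *. assert (0 < u) by apply exp_pos.
    assert (P1 : 0 < u*u - 1 - t*(u*2)).
    { replace (u*u - 1 - t*(u*2)) with (2*u*((u - /u)/2 - t)) by (field; lra). apply Rmult_lt_0_compat; lra. }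
    assert (P2 : 0 < t * (u * u + 1) - (u * u - 1)).
    { replace (t * (u * u + 1) - (u * u - 1)) with (2*u*(t * ((u + / u) / 2) - (u - / u) / 2)) by (field; lra). apply Rmult_lt_0_compat; lra. }
    assert (P3 : 0 < u * u - 1).
    { replace (u * u - 1) with (2*u*((u - / u) / 2)) by (field; lra). apply Rmult_lt_0_compat; lra. }
    assert (P4 : 0 < u * u + 1 + -1 * (u * 2)).
    { replace (u * u + 1 + -1 * (u * 2)) with (2*u*((u + / u) / 2 - 1)) by (field; lra). apply Rmult_lt_0_compat; lra. }
    field. repeat split; intro; lra.
Qed.

Lemma ln_le' x y : 0 < x -> x <= y -> ln x <= ln y.
Proof. intros Hx Hxy. destruct (Req_dec x y). subst; lra. apply Rlt_le, ln_increasing; lra. Qed.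

Lemma exp_le' x y : x <= y -> exp x <= exp y.
Proof. intros H. destruct (Req_dec x y). subst; lra. apply Rlt_le, exp_increasing; lra. Qed.

Lemma cosh_ge1 t : 1 <= cosh t.
Proof.
  unfold cosh. rewrite exp_Ropp. assert (0 < exp t) by apply exp_pos.
  set (u := exp t) in *. 
  assert (0 <= (u - 1)^2 / u) by (apply Rdiv_le_0_compat; [apply pow2_ge_0|lra]).
  replace ((u + / u) / 2) with (1 + (u - 1)^2 / u / 2) by (field; lra). lra.
Qed.

Lemma cosh_le3 t : 0 <= t <= 1 -> cosh t <= 3.
Proof.
  intros Ht. unfold cosh.
  assert (exp (- t) <= exp t) by (apply exp_le'; lra).
  assert (exp t <= exp 1) by (apply exp_le'; lra).
  generalize exp_le_3; lra.
Qed.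

Lemma small_bound (g : R -> R) (K : R) :
  0 < K ->
  (forall t, 0 < t <= 1 -> Rabs (g t) <= K * (cosh t - 1)) ->
  forall eps, 0 < eps -> exists delta, 0 < delta /\ forall t, 0 < t < 0 + delta -> Rabs (g t - 0) < eps.
Proof.
  intros HK Hg eps He.
  exists (Rmin 1 (eps / (2 * K))). split.
  - apply Rmin_pos; [lra|]. apply Rdiv_lt_0_compat; lra.
  - intros t Ht. rewrite Rplus_0_l in Ht.
    assert (H1 := Rmin_l 1 (eps / (2 * K))). assert (H2 := Rmin_r 1 (eps / (2 * K))).
    rewrite Rminus_0_r.
    assert (Ht1 : 0 < t <= 1) by lra.
    specialize (Hg t Ht1).
    assert (HC4 := ineq_I4 t ltac:(lra)). assert (HC3 := cosh_le3 t ltac:(lra)).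
    assert (cosh t - 1 <= 3 / 2 * t) by nra.
    assert (t < eps / (2 * K)) by lra.
    assert (t * (2 * K) < eps) by (apply (Rmult_lt_compat_r (2 * K)) in H0; [|lra]; field_simplify in H0; lra).
    nra.
Qed.

Lemma Jf_pos b : 0 < b -> 0 < Jf b.
Proof.
  intros Hb.
  apply (right_lim_incr Jf (fun t => ff t / (5 * t * sinh t * fN t * fM t)) 0 b 0 Hb).
  - intros t Ht. assert (HM := ineq_I7 t ltac:(lra)). assert (HN := ineq_I5 t ltac:(lra)).
    assert (HC := ineq_I3 t ltac:(lra)).
    assert (0 < t^3) by (apply pow_lt; lra). assert (0 < t^2) by (apply pow_lt; lra).
    apply Jf_derive; unfold fN, fM; lra.
  - intros t Ht. assert (HM := ineq_I7 t ltac:(lra)). assert (HN := ineq_I5 t ltac:(lra)).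
    assert (0 < t^3) by (apply pow_lt; lra).
    apply Rdiv_lt_0_compat. apply ineq_f; lra.
    unfold fN, fM. apply Rmult_lt_0_compat; [|lra]. apply Rmult_lt_0_compat; [|lra]. apply Rmult_lt_0_compat; lra.
  - apply (small_bound _ (8/5)); [lra|]. intros t Ht.
    assert (HM := ineq_I7 t ltac:(lra)). assert (HN := ineq_I5 t ltac:(lra)).
    assert (HC := ineq_I3 t ltac:(lra)). assert (HC4 := ineq_I4 t ltac:(lra)).
    assert (HN6 := ineq_I6 t ltac:(lra)). assert (HM8 := ineq_I8 t ltac:(lra)).
    assert (Hc1 := cosh_ge1 t).
    assert (Ht3 : 0 < t^3) by (apply pow_lt; lra). assert (Ht2 : 0 < t^2) by (apply pow_lt; lra).
    assert (HA1 : 1 <= Ajf t).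
    { unfold Ajf. apply (Rmult_le_reg_r (t^2)); auto. unfold Rdiv. rewrite Rmult_assoc, Rinv_l by lra. lra. }
    assert (HA2 : Ajf t <= cosh t).
    { unfold Ajf. apply (Rmult_le_reg_r (t^2)); auto. unfold Rdiv. rewrite Rmult_assoc, Rinv_l by lra. lra. }
    assert (HB1 : / cosh t <= Bjf t).
    { unfold Bjf, fN, fM. apply (Rmult_le_reg_r (2 * (sinh t - t) * cosh t)). nra.
      field_simplify; [|lra|lra].
      assert (0 <= cosh t * (t * cosh t - sinh t - t^3/3)) by (apply Rmult_le_pos; lra). lra. }
    assert (HB2 : Bjf t <= cosh t).
    { unfold Bjf, fN, fM. apply (Rmult_le_reg_r (2 * (sinh t - t))). nra.
      field_simplify; [|lra].
      assert (0 <= cosh t * (sinh t - t - t^3/6)) by (apply Rmult_le_pos; lra). nra. }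
    assert (L1 := ln_le' 1 _ ltac:(lra) HA1). assert (L2 := ln_le' (Ajf t) _ ltac:(lra) HA2).
    assert (HiC : 0 < / cosh t) by (apply Rinv_0_lt_compat; lra).
    assert (L3 := ln_le' _ _ HiC HB1). assert (L4 := ln_le' (Bjf t) _ ltac:(lra) HB2).
    rewrite ln_Rinv in L3 by lra. rewrite ln_1 in L1.
    assert (L5 := ln_le_sub1 (cosh t) ltac:(lra)).
    unfold Jf. apply Rabs_le. lra.
Qed.

Definition Ef x := (sinh x / x) ^ 2.
Definition zK r x := exp (r * ln (Ef x)).
Definition Kf r x := ln (2 * zK r x - 1) - r / 2 * ln (Ef x) - r * ln (cosh x).
Definition dK r x := r * ((x * (cosh x ^ 2 + sinh x ^ 2) - sinh x * cosh x) - 2 * zK r x * (sinh x * cosh x - x))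
   / ((2 * zK r x - 1) * x * sinh x * cosh x).

Lemma Kf_derive r x : 0 < x -> 0 < sinh x -> 1/2 < zK r x ->
  is_derive (Kf r) x (dK r x).
Proof.
  intros Hx Hs Hz.
  unfold Kf, dK, zK, Ef in *. unfold cosh, sinh in *.
  auto_derive.
  - assert (HQ : (exp x + - exp (- x)) * / 2 * / x * ((exp x + - exp (- x)) * / 2 * / x * 1) = ((exp x - exp (- x)) / 2 / x) ^ 2) by (field; lra).
    rewrite HQ. assert (0 < exp (- x)) by apply exp_pos.
    assert (0 < ((exp x - exp (- x)) / 2 / x) ^ 2) by (apply pow_lt, Rdiv_lt_0_compat; lra).
    repeat split; try (intro; lra); lra.
  - rewrite exp_Ropp in *. 
    assert (0 < exp x) by apply exp_pos. set (u := exp x) in *.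
    replace (((u - / u) / 2 / x) ^ 2) with ((u + - / u) * / 2 * / x * ((u + - / u) * / 2 * / x * 1)) in * by (field; lra).
    set (z := exp (r * ln ((u + - / u) * / 2 * / x * ((u + - / u) * / 2 * / x * 1)))) in *.
    assert (P3 : 0 < u * u - 1).
    { replace (u * u - 1) with (2*u*((u - / u) / 2)) by (field; lra). apply Rmult_lt_0_compat; lra. }
    field. repeat split; intro; nra.
Qed.

Lemma cs1 x : cosh x ^ 2 - sinh x ^ 2 = 1.
Proof. unfold cosh, sinh. rewrite exp_Ropp. assert (0 < exp x) by apply exp_pos. field. lra. Qed.
Lemma cosh2 x : cosh (2 * x) = cosh x ^ 2 + sinh x ^ 2.
Proof. unfold cosh, sinh. rewrite !exp_Ropp, e2. assert (0 < exp x) by apply exp_pos. field. lra. Qed.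
Lemma sinh2 x : sinh (2 * x) = 2 * sinh x * cosh x.
Proof. unfold cosh, sinh. rewrite !exp_Ropp, e2. assert (0 < exp x) by apply exp_pos. field. lra. Qed.

Lemma sc_gt x : 0 < x -> x < sinh x * cosh x.
Proof.
  intros Hx. assert (H := ineq_I7 (2 * x) ltac:(lra)). rewrite sinh2 in H.
  assert (0 < (2 * x) ^ 3) by (apply pow_lt; lra). lra.
Qed.

Lemma sinh_pos x : 0 < x -> 0 < sinh x.
Proof. intros Hx. assert (H := ineq_I7 x Hx). assert (0 < x ^ 3) by (apply pow_lt; lra). lra. Qed.

Lemma Bjf_2x x : 0 < x -> Bjf (2 * x) = (x * (cosh x ^ 2 + sinh x ^ 2) - sinh x * cosh x) / (2 * (sinh x * cosh x - x)).
Proof.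
  intros Hx. assert (H := sc_gt x Hx). unfold Bjf, fN, fM. rewrite cosh2, sinh2. field. lra.
Qed.

Lemma Ajf_2x x : 0 < x -> Ajf (2 * x) = Ef x.
Proof.
  intros Hx. unfold Ajf, Ef. rewrite cosh2. generalize (cs1 x). intros H.
  replace (cosh x ^ 2) with (1 + sinh x ^ 2) by lra. field. lra.
Qed.

Lemma dK_neg r x : 0 < r -> 0 < x -> 1/2 < zK r x -> Bjf (2 * x) < zK r x -> dK r x < 0.
Proof.
  intros Hr Hx Hz HB. rewrite Bjf_2x in HB by auto.
  assert (H := sc_gt x Hx). assert (Hs := sinh_pos x Hx). assert (Hc := cosh_ge1 x).
  unfold dK. set (z := zK r x) in *.
  set (P := x * (cosh x ^ 2 + sinh x ^ 2) - sinh x * cosh x) in *.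
  set (Q := sinh x * cosh x - x) in *.
  assert (HPQ : P = P / (2 * Q) * (2 * Q)) by (field; unfold Q; lra).
  assert (0 < (2 * z - 1) * x * sinh x * cosh x).
  { apply Rmult_lt_0_compat; [|lra]. apply Rmult_lt_0_compat; [|lra]. apply Rmult_lt_0_compat; lra. }
  apply Rmult_lt_reg_r with ((2 * z - 1) * x * sinh x * cosh x); auto.
  unfold Rdiv. rewrite Rmult_assoc, Rinv_l, Rmult_0_l by lra.
  set (w := P / (2 * Q)) in *. assert (w * (2 * Q) < z * (2 * Q)) by (apply Rmult_lt_compat_r; unfold Q; lra).
  assert (0 < r * (2 * z * Q - P)) by (apply Rmult_lt_0_compat; lra). lra.
Qed.

Lemma dK_pos r x : 0 < r -> 0 < x -> 1/2 < zK r x -> zK r x < Bjf (2 * x) -> 0 < dK r x.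
Proof.
  intros Hr Hx Hz HB. rewrite Bjf_2x in HB by auto.
  assert (H := sc_gt x Hx). assert (Hs := sinh_pos x Hx). assert (Hc := cosh_ge1 x).
  unfold dK. set (z := zK r x) in *.
  set (P := x * (cosh x ^ 2 + sinh x ^ 2) - sinh x * cosh x) in *.
  set (Q := sinh x * cosh x - x) in *.
  assert (HPQ : P = P / (2 * Q) * (2 * Q)) by (field; unfold Q; lra).
  assert (0 < (2 * z - 1) * x * sinh x * cosh x).
  { apply Rmult_lt_0_compat; [|lra]. apply Rmult_lt_0_compat; [|lra]. apply Rmult_lt_0_compat; lra. }
  apply Rmult_lt_reg_r with ((2 * z - 1) * x * sinh x * cosh x); auto.
  unfold Rdiv. rewrite Rmult_0_l. rewrite Rmult_assoc, Rinv_l by lra.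
  set (w := P / (2 * Q)) in *. assert (z * (2 * Q) < w * (2 * Q)) by (apply Rmult_lt_compat_r; unfold Q; lra).
  assert (0 < r * (P - 2 * z * Q)) by (apply Rmult_lt_0_compat; lra). lra.
Qed.

Lemma Ef_gt1 x : 0 < x -> 1 < Ef x.
Proof.
  intros Hx. unfold Ef. assert (H := ineq_I7 x Hx). assert (0 < x ^ 3) by (apply pow_lt; lra).
  assert (1 < sinh x / x). { apply (Rmult_lt_reg_r x); auto. unfold Rdiv. rewrite Rmult_assoc, Rinv_l by lra. lra. }
  nra.
Qed.

Lemma zK_ge1 r x : 0 < r -> 0 < x -> 1 <= zK r x.
Proof.
  intros Hr Hx. unfold zK. assert (H := Ef_gt1 x Hx).
  assert (0 <= ln (Ef x)) by (apply ln_pos'; lra).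
  rewrite <- exp_0. apply exp_le'. nra.
Qed.

Lemma Kf_bound r t : 0 < r < 1 -> 0 < t <= 1 -> Rabs (Kf r t) <= 8 * (cosh t - 1).
Proof.
  intros Hr Ht.
  assert (HE := Ef_gt1 t ltac:(lra)). assert (HC3 := cosh_le3 t ltac:(lra)). assert (Hc1 := cosh_ge1 t).
  assert (HN := ineq_I5 t ltac:(lra)). assert (Ht3 : 0 < t^3) by (apply pow_lt; lra).
  assert (HEc : Ef t <= cosh t ^ 2).
  { unfold Ef. assert (sinh t / t <= cosh t).
    { apply (Rmult_le_reg_r t); [lra|]. unfold Rdiv. rewrite Rmult_assoc, Rinv_l by lra. lra. }
    assert (0 < sinh t / t) by (apply Rdiv_lt_0_compat; [apply sinh_pos|]; lra).
    simpl. nra. }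
  assert (HlE : 0 <= ln (Ef t)) by (apply ln_pos'; lra).
  assert (HlE2 : ln (Ef t) <= 2 * ln (cosh t)).
  { replace (2 * ln (cosh t)) with (ln (cosh t ^ 2)) by (simpl; rewrite Rmult_1_r, ln_mult by lra; ring).
    apply ln_le'; lra. }
  assert (Hz1 := zK_ge1 r t ltac:(lra) ltac:(lra)).
  assert (HzE : zK r t <= Ef t).
  { unfold zK. rewrite <- (exp_ln (Ef t)) at 2 by lra. apply exp_le'. nra. }
  assert (Hl1 : 0 <= ln (2 * zK r t - 1)) by (apply ln_pos'; lra).
  assert (Hl2 : ln (2 * zK r t - 1) <= 2 * zK r t - 2) by (generalize (ln_le_sub1 (2 * zK r t - 1) ltac:(lra)); lra).
  assert (Hlc : 0 <= ln (cosh t)) by (apply ln_pos'; lra).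
  assert (Hlc2 := ln_le_sub1 (cosh t) ltac:(lra)).
  unfold Kf. apply Rabs_le. split; nra.
Qed.

Lemma K_neg r b : 0 < r < 1 -> 0 < b ->
  (forall x, 0 < x < b -> Bjf (2 * x) < zK r x) -> Kf r b < 0.
Proof.
  intros Hr Hb HB.
  cut (0 < - Kf r b). lra.
  apply (right_lim_incr (fun x => - Kf r x) (fun x => - dK r x) 0 b 0 Hb).
  - intros t Ht. apply is_derive_Reals. apply (derivable_pt_lim_opp (Kf r)). apply is_derive_Reals. apply Kf_derive. lra. apply sinh_pos; lra.
    generalize (zK_ge1 r t ltac:(lra) ltac:(lra)); lra.
  - intros t Ht. assert (dK r t < 0); [|lra].
    apply dK_neg; try lra. generalize (zK_ge1 r t ltac:(lra) ltac:(lra)); lra. apply HB; lra.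
  - apply (small_bound _ 8); [lra|]. intros t Ht. rewrite Rabs_Ropp. apply Kf_bound; lra.
Qed.

Lemma K_pos r b : 0 < r < 1 -> 0 < b ->
  (forall x, 0 < x < b -> zK r x < Bjf (2 * x)) -> 0 < Kf r b.
Proof.
  intros Hr Hb HB.
  apply (right_lim_incr (fun x => Kf r x) (fun x => dK r x) 0 b 0 Hb).
  - intros t Ht. apply Kf_derive. lra. apply sinh_pos; lra.
    generalize (zK_ge1 r t ltac:(lra) ltac:(lra)); lra.
  - intros t Ht. 
    apply dK_pos; try lra. generalize (zK_ge1 r t ltac:(lra) ltac:(lra)); lra. apply HB; lra.
  - apply (small_bound _ 8); [lra|]. intros t Ht. apply Kf_bound; lra.
Qed.

Lemma Bjf_pos y : 0 < y -> 0 < Bjf y.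
Proof.
  intros Hy. unfold Bjf, fN, fM. assert (H1 := ineq_I7 y Hy). assert (H2 := ineq_I5 y Hy).
  assert (0 < y ^ 3) by (apply pow_lt; lra). apply Rdiv_lt_0_compat; lra.
Qed.

Lemma Ajf_pos y : 0 < y -> 0 < Ajf y.
Proof.
  intros Hy. unfold Ajf. assert (H := ineq_I3 y Hy). assert (0 < y ^ 2) by (apply pow_lt; lra).
  apply Rdiv_lt_0_compat; lra.
Qed.

Lemma core_S3 x : 0 < x -> Kf (3/5) x < 0.
Proof.
  intros Hx. apply K_neg; [lra|auto|]. intros t Ht.
  assert (HJ := Jf_pos (2 * t) ltac:(lra)). unfold Jf in HJ. rewrite Ajf_2x in HJ by lra.
  unfold zK. rewrite <- (exp_ln (Bjf (2 * t))) by (apply Bjf_pos; lra).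
  apply exp_increasing. lra.
Qed.

Lemma bern_conv l u : 1 <= l -> 0 < u -> 1 + l * (u - 1) <= Rpower u l.
Proof.
  intros Hl Hu.
  set (g := fun v => exp (l * ln v) - 1 - l * (v - 1)).
  set (dg := fun v => l * (exp (l * ln v) / v) - l).
  assert (Hd : forall v, 0 < v -> derivable_pt_lim g v (dg v)).
  { intros v Hv. apply is_derive_Reals. unfold g, dg. auto_derive. lra. field. lra. }
  assert (Hg1 : g 1 = 0) by (unfold g; rewrite ln_1, Rmult_0_r, exp_0; lra).
  cut (0 <= g u). unfold g, Rpower; lra.
  destruct (Rtotal_order u 1) as [Hlt|[Heq|Hgt]].
  - destruct (MVT_cor2 g dg u 1 Hlt) as [c [Hc1 Hc2]].
    { intros c Hc. apply Hd. lra. }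
    assert (exp (l * ln c) <= c).
    { rewrite <- (exp_ln c) at 2 by lra. apply exp_le'.
      assert (ln c <= 0) by (rewrite <- ln_1; apply ln_le'; lra). nra. }
    assert (exp (l * ln c) / c <= 1) by (apply (Rmult_le_reg_r c); [lra|]; field_simplify; lra).
    assert (0 <= l * (1 - exp (l * ln c) / c) * (1 - u)) by (apply Rmult_le_pos; [apply Rmult_le_pos|]; lra).
    unfold dg in Hc1. lra.
  - subst. lra.
  - destruct (MVT_cor2 g dg 1 u Hgt) as [c [Hc1 Hc2]].
    { intros c Hc. apply Hd. lra. }
    assert (c <= exp (l * ln c)).
    { rewrite <- (exp_ln c) at 1 by lra. apply exp_le'.
      assert (0 <= ln c) by (apply ln_pos'; lra). nra. }
    assert (1 <= exp (l * ln c) / c) by (apply (Rmult_le_reg_r c); [lra|]; field_simplify; lra).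
    assert (0 <= l * (exp (l * ln c) / c - 1) * (u - 1)) by (apply Rmult_le_pos; [apply Rmult_le_pos|]; lra).
    unfold dg in Hc1. lra.
Qed.

Lemma bern_conc b u : 0 < b < 1 -> 0 < u -> Rpower u b <= 1 + b * (u - 1).
Proof.
  intros Hb Hu. set (v := 1 + b * (u - 1)).
  assert (Hv : 0 < v) by (unfold v; nra).
  assert (H := bern_conv (1 / b) v ltac:(apply (Rmult_le_reg_r b); [lra|]; field_simplify; lra) Hv).
  replace (1 + 1 / b * (v - 1)) with u in H by (unfold v; field; lra).
  unfold Rpower in *. rewrite <- (exp_ln v) by auto. apply exp_le'.
  assert (ln u <= 1 / b * ln v).
  { rewrite <- (ln_exp (1 / b * ln v)). apply ln_le'; auto. }
  apply (Rmult_le_compat_l b) in H0; [|lra]. replace (b * (1 / b * ln v)) with (ln v) in H0 by (field; lra). lra.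
Qed.

Lemma AB_small b y : 0 < b < 3/5 -> 0 < y <= Rmin (1/2) ((3 / (5 * b) - 1) / 9) ->
  exp (b * ln (Ajf y)) < Bjf y.
Proof.
  intros Hb Hy.
  set (g := 3 / (5 * b)) in *.
  assert (Hg : 1 < g) by (unfold g; apply (Rmult_lt_reg_r (5 * b)); [lra|]; field_simplify; lra).
  assert (Hm1 := Rmin_l (1/2) ((g - 1) / 9)). assert (Hm2 := Rmin_r (1/2) ((g - 1) / 9)).
  assert (Hy1 : y <= 1/2) by lra. assert (Hy2 : y <= (g - 1) / 9) by lra.
  assert (HA := Ajf_pos y ltac:(lra)).
  assert (Hber := bern_conc b (Ajf y) ltac:(lra) HA). unfold Rpower in Hber.
  assert (HC3 := cosh_le3 y ltac:(lra)). assert (Hc1 := cosh_ge1 y).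
  assert (H10 := ineq_I10 y ltac:(lra)). assert (H9 := ineq_I9 y ltac:(lra)).
  assert (H8 := ineq_I8 y ltac:(lra)). assert (H7 := ineq_I7 y ltac:(lra)).
  assert (H4 := ineq_I4 y ltac:(lra)).
  assert (Hy2p : 0 < y ^ 2) by (apply pow_lt; lra). assert (Hy3p : 0 < y ^ 3) by (apply pow_lt; lra).
  assert (HA1 : Ajf y - 1 <= y ^ 2 * cosh y / 12).
  { unfold Ajf. apply (Rmult_le_reg_r (y ^ 2)); auto.
    replace ((2 * (cosh y - 1) / y ^ 2 - 1) * y ^ 2) with (2 * (cosh y - 1 - y^2/2)) by (field; lra).
    replace (y ^ 2 * cosh y / 12 * y ^ 2) with (2 * (y ^ 4 * cosh y / 24)) by field. lra. }
  assert (HB1 : y ^ 2 / (20 * cosh y) <= Bjf y - 1).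
  { unfold Bjf, fN, fM.
    replace (y * cosh y - sinh y) with ((y * cosh y - 3 * sinh y + 2 * y) + 2 * (sinh y - y)) by ring.
    set (M := sinh y - y) in *. set (N9 := y * cosh y - 3 * sinh y + 2 * y) in *.
    replace ((N9 + 2 * M) / (2 * M) - 1) with (N9 / (2 * M)) by (field; lra).
    apply (Rmult_le_reg_r (20 * cosh y * (2 * M))). nra.
    field_simplify; [|lra|lra].
    assert (y ^ 2 * (2 * M) <= y ^ 2 * (y ^ 3 * cosh y / 3)) by (apply Rmult_le_compat_l; lra).
    assert (y ^ 5 * cosh y / 3 <= 20 * cosh y * N9) by nra.
    replace (y ^ 2 * (y ^ 3 * cosh y / 3)) with (y ^ 5 * cosh y / 3) in H by field. nra. }
  assert (HCc : cosh y - 1 <= 3 / 2 * y ^ 2) by nra.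
  assert (Hyy : y ^ 2 <= (g - 1) / 18) by (simpl; nra).
  assert (HC2 : 20 * b * cosh y ^ 2 < 12).
  { assert (cosh y ^ 2 < g) by (simpl in *; nra).
    unfold g in H. apply (Rmult_lt_compat_l (20 * b)) in H; [|lra].
    replace (20 * b * (3 / (5 * b))) with 12 in H by (field; lra). lra. }
  assert (b * (Ajf y - 1) < Bjf y - 1).
  { apply Rle_lt_trans with (b * (y ^ 2 * cosh y / 12)). apply Rmult_le_compat_l; lra.
    apply Rlt_le_trans with (y ^ 2 / (20 * cosh y)); auto.
    apply (Rmult_lt_reg_r (240 * cosh y)). lra. field_simplify; [|lra].
    assert (0 < y ^ 2 * (12 - 20 * b * cosh y ^ 2)) by (apply Rmult_lt_0_compat; lra). nra. }
  lra.
Qed.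

Lemma core_N2 b : 0 < b < 3/5 -> exists x, 0 < x /\ 0 < Kf b x.
Proof.
  intros Hb. set (d := Rmin (1/2) ((3 / (5 * b) - 1) / 9)).
  assert (Hd : 0 < d).
  { unfold d. apply Rmin_pos; [lra|]. apply Rdiv_lt_0_compat; [|lra].
    assert (1 < 3 / (5 * b)) by (apply (Rmult_lt_reg_r (5 * b)); [lra|]; field_simplify; lra). lra. }
  exists (d / 2). split; [lra|].
  apply K_pos; [lra|lra|]. intros x Hx. unfold zK. rewrite <- Ajf_2x by lra.
  apply AB_small; auto. split; [lra|]. fold d. lra.
Qed.

Definition phi a := (sqrt (8 + a * a) + a) / 4.

Lemma sqrt_facts a : 0 <= sqrt (8 + a * a) /\ sqrt (8 + a * a) * sqrt (8 + a * a) = 8 + a * a.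
Proof.
  split. apply sqrt_pos. apply sqrt_sqrt. nra.
Qed.

Lemma H_nz r t : r <> 0 -> 0 < t -> H r t = Rpower (phi (Rpower t r)) (1 / r).
Proof.
  intros Hr Ht. unfold H. destruct (Req_EM_T r 0) as [E|E]; [contradiction|].
  unfold phi. replace (Rpower t (2 * r)) with (Rpower t r * Rpower t r). reflexivity.
  unfold Rpower. rewrite <- exp_plus. f_equal. ring.
Qed.

Lemma H_0 t : H 0 t = Rpower t (1/3).
Proof. unfold H. destruct (Req_EM_T 0 0) as [E|E]; [reflexivity|lra]. Qed.

Lemma phi_lt_iff z a : 0 < z -> (z < phi a <-> 2 * z - / z < a).
Proof.
  intros Hz. destruct (sqrt_facts a) as [Hs1 Hs2]. set (s := sqrt (8 + a * a)) in *. unfold phi. fold s.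
  assert (Hsa : a < s) by nra. assert (Hsa' : - a < s) by nra.
  assert (Ez : 2 * z - / z = (2 * z * z - 1) / z) by (field; lra).
  rewrite Ez. split; intros Hh.
  - apply (Rmult_lt_reg_r z); auto. unfold Rdiv. rewrite Rmult_assoc, Rinv_l by lra. nra.
  - assert (2 * z * z - 1 < a * z).
    { apply (Rmult_lt_compat_r z) in Hh; auto. unfold Rdiv in Hh. rewrite Rmult_assoc, Rinv_l in Hh by lra. lra. }
    nra.
Qed.

Lemma phi_gt_iff z a : 0 < z -> (phi a < z <-> a < 2 * z - / z).
Proof.
  intros Hz. destruct (sqrt_facts a) as [Hs1 Hs2]. set (s := sqrt (8 + a * a)) in *. unfold phi. fold s.
  assert (Hsa : a < s) by nra. assert (Hsa' : - a < s) by nra.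
  assert (Ez : 2 * z - / z = (2 * z * z - 1) / z) by (field; lra).
  rewrite Ez. split; intros Hh.
  - apply (Rmult_lt_reg_r z); auto. unfold Rdiv. rewrite Rmult_assoc, Rinv_l by lra. nra.
  - assert (a * z < 2 * z * z - 1).
    { apply (Rmult_lt_compat_r z) in Hh; auto. unfold Rdiv in Hh. rewrite Rmult_assoc, Rinv_l in Hh by lra. lra. }
    nra.
Qed.

Lemma phi_pos a : 0 < a -> 0 < phi a.
Proof. intros Ha. unfold phi. generalize (sqrt_pos (8 + a * a)). lra. Qed.

Lemma lt_exp_ln u v : 0 < u -> 0 < v -> (u < v <-> ln u < ln v).
Proof. intros Hu Hv. split. apply ln_increasing; auto. apply ln_lt_inv; auto. Qed.

Lemma lt_H r t h : 0 < r -> 0 < t -> 0 < h ->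
  (h < H r t <-> 2 * Rpower h r - / Rpower h r < Rpower t r).
Proof.
  intros Hr Ht Hh. rewrite H_nz by lra.
  assert (Ha : 0 < Rpower t r) by apply exp_pos. assert (Hw : 0 < Rpower h r) by apply exp_pos.
  assert (Hp := phi_pos _ Ha).
  rewrite <- phi_lt_iff by auto.
  rewrite (lt_exp_ln h) by (auto; apply exp_pos). rewrite (lt_exp_ln (Rpower h r)) by auto.
  rewrite !ln_Rpower.
  split; intros HH.
  - apply (Rmult_lt_compat_l r) in HH; auto. replace (r * (1 / r * ln (phi (Rpower t r)))) with (ln (phi (Rpower t r))) in HH by (field; lra). lra.
  - apply (Rmult_lt_reg_l r); auto. replace (r * (1 / r * ln (phi (Rpower t r)))) with (ln (phi (Rpower t r))) by (field; lra). lra.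
Qed.

Lemma gt_H r t h : 0 < r -> 0 < t -> 0 < h ->
  (H r t < h <-> Rpower t r < 2 * Rpower h r - / Rpower h r).
Proof.
  intros Hr Ht Hh. rewrite H_nz by lra.
  assert (Ha : 0 < Rpower t r) by apply exp_pos. assert (Hw : 0 < Rpower h r) by apply exp_pos.
  assert (Hp := phi_pos _ Ha).
  rewrite <- phi_gt_iff by auto.
  rewrite (lt_exp_ln _ h) by (auto; apply exp_pos). rewrite (lt_exp_ln _ (Rpower h r)) by auto.
  rewrite !ln_Rpower.
  split; intros HH.
  - apply (Rmult_lt_compat_l r) in HH; auto. replace (r * (1 / r * ln (phi (Rpower t r)))) with (ln (phi (Rpower t r))) in HH by (field; lra). lra.
  - apply (Rmult_lt_reg_l r); auto. replace (r * (1 / r * ln (phi (Rpower t r)))) with (ln (phi (Rpower t r))) by (field; lra). lra.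
Qed.

Lemma Kf_form r x : 0 < r -> 0 < x ->
  Kf r x = ln (2 * Rpower (sinh x / x) r - / Rpower (sinh x / x) r) - ln (Rpower (cosh x) r).
Proof.
  intros Hr Hx. assert (Hh : 1 < sinh x / x).
  { generalize (Ef_gt1 x Hx). unfold Ef. intros HE.
    assert (0 < sinh x / x) by (apply Rdiv_lt_0_compat; [apply sinh_pos|]; lra). nra. }
  assert (Hc := cosh_ge1 x).
  set (h := sinh x / x) in *.
  unfold Kf, zK, Ef. fold h.
  assert (Hl : ln (h ^ 2) = 2 * ln h) by (simpl; rewrite Rmult_1_r, ln_mult by lra; ring).
  rewrite Hl. unfold Rpower. rewrite ln_exp.
  set (w := exp (r * ln h)).
  assert (Hw : 0 < w) by apply exp_pos.
  replace (exp (r * (2 * ln h))) with (w * w) by (unfold w; rewrite <- exp_plus; f_equal; ring).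
  assert (Hw1 : 1 <= w) by (unfold w; rewrite <- exp_0; apply exp_le'; assert (0 <= ln h) by (apply ln_pos'; lra); nra).
  replace (2 * (w * w) - 1) with ((2 * w - / w) * w) by (field; lra).
  rewrite ln_mult. unfold w at 3. rewrite ln_exp. field.
  assert (0 < 2 * w - / w). { assert (/ w <= 1) by (rewrite <- Rinv_1; apply Rinv_le_contravar; lra). lra. }
  lra. lra.
Qed.

Lemma lazarevic x : 0 < x -> Rpower (cosh x) (1/3) < sinh x / x.
Proof.
  intros Hx. assert (HI := ineq_I11 x Hx). assert (Hc := cosh_ge1 x).
  assert (Hh : 0 < sinh x / x) by (apply Rdiv_lt_0_compat; [apply sinh_pos|]; lra).
  assert (Hx3 : 0 < x ^ 3) by (apply pow_lt; lra).
  assert (cosh x < (sinh x / x) ^ 3).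
  { apply (Rmult_lt_reg_r (x ^ 3)); auto. rewrite <- Rpow_mult_distr.
    replace (sinh x / x * x) with (sinh x) by (field; lra). lra. }
  unfold Rpower. rewrite <- (exp_ln (sinh x / x)) by auto. apply exp_increasing.
  assert (ln (cosh x) < ln ((sinh x / x) ^ 3)) by (apply ln_increasing; lra).
  rewrite ln_pow in H0 by auto. simpl INR in H0. lra.
Qed.

Lemma Hneg_le r t : r < 0 -> 0 < t -> H r t <= Rpower t (1/3).
Proof.
  intros Hr Ht. rewrite H_nz by lra.
  set (z := exp (r * ln t / 3)).
  assert (Hz : 0 < z) by apply exp_pos.
  assert (Ha : Rpower t r = z ^ 3).
  { unfold Rpower, z. simpl. rewrite Rmult_1_r, <- !exp_plus. f_equal. field. }
  assert (Hzp : z <= phi (Rpower t r)).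
  { destruct (Rle_or_lt z (phi (Rpower t r))) as [Hle|Hlt]; auto.
    apply phi_gt_iff in Hlt; auto. rewrite Ha in Hlt.
    assert (2 * z - / z <= z ^ 3); [|lra].
    apply (Rmult_le_reg_r z); auto. replace ((2 * z - / z) * z) with (2 * z * z - 1) by (field; lra).
    assert (0 <= (z * z - 1) ^ 2) by apply pow2_ge_0. simpl in *. nra. }
  assert (Hp : 0 < phi (Rpower t r)) by lra.
  unfold Rpower at 1. unfold Rpower at 2. apply exp_le'.
  assert (H0 : ln z <= ln (phi (Rpower t r))) by (apply ln_le'; auto).
  unfold z in H0. rewrite ln_exp in H0.
  assert (Hri : 1 / r < 0) by (unfold Rdiv; rewrite Rmult_1_l; apply Rinv_lt_0_compat; auto).
  apply (Rmult_le_compat_neg_l (1/r)) in H0; [|lra].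
  replace (1 / r * (r * ln t / 3)) with (1/3 * ln t) in H0 by (field; lra). lra.
Qed.

Lemma Halpha_ge a t : 0 < a -> 0 < t -> t / Rpower 2 (1/a) <= H a t.
Proof.
  intros Ha Ht. rewrite H_nz by lra.
  set (b := Rpower t a). assert (Hb : 0 < b) by apply exp_pos.
  assert (Hphi : b / 2 <= phi b).
  { unfold phi. assert (b <= sqrt (8 + b * b)).
    { rewrite <- (sqrt_square b) at 1 by lra. apply sqrt_le_1_alt. nra. }
    lra. }
  apply Rle_trans with (Rpower (b / 2) (1 / a)).
  - right. unfold b, Rpower. rewrite ln_div by (try apply exp_pos; lra). rewrite ln_exp.
    replace (1 / a * (a * ln t - ln 2)) with (ln t + - (1 / a * ln 2)) by (field; lra).
    rewrite exp_plus, exp_Ropp, exp_ln by lra. reflexivity.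
  - apply Rle_Rpower_l. apply Rlt_le, Rdiv_lt_0_compat; lra. split; [lra|auto].
Qed.

Lemma mono_step p q h c : 0 < p <= q -> 1 <= h -> 0 < c ->
  2 * Rpower h p - / Rpower h p < Rpower c p ->
  2 * Rpower h q - / Rpower h q < Rpower c q.
Proof.
  intros Hpq Hh Hc Hyp.
  set (l := q / p).
  assert (Hl : 1 <= l) by (unfold l; apply (Rmult_le_reg_r p); [lra|]; field_simplify; lra).
  set (w := Rpower h p) in *. set (a := Rpower c p) in *.
  assert (HP : 0 <= ln h) by (apply ln_pos'; auto).
  assert (Hw1 : 1 <= w) by (unfold w, Rpower; rewrite <- exp_0; apply exp_le'; nra).
  set (Q := 2 * w - / w) in *.
  assert (Hiw : / w <= 1) by (rewrite <- Rinv_1; apply Rinv_le_contravar; lra).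
  assert (HQ : 0 < Q) by (unfold Q; lra).
  assert (Hcq : Rpower c q = Rpower a l).
  { unfold a, Rpower, l. rewrite ln_exp. f_equal. field. lra. }
  assert (HW : Rpower h q = Rpower w l).
  { unfold w, Rpower, l. rewrite ln_exp. f_equal. field. lra. }
  set (z := / (w * w)).
  assert (Hz : 0 < z <= 1).
  { unfold z. split. apply Rinv_0_lt_compat; nra. rewrite <- Rinv_1. apply Rinv_le_contravar; nra. }
  assert (HQz : Q = w * (2 - z)) by (unfold Q, z; field; lra).
  assert (Hlt : Rpower Q l < Rpower a l) by (apply Rlt_Rpower_l; lra).
  assert (HQl : Rpower Q l = Rpower w l * Rpower (2 - z) l) by (rewrite HQz; symmetry; apply Rpower_mult_distr; lra).
  assert (B1 := bern_conv l (2 - z) Hl ltac:(lra)).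
  assert (B2 := bern_conv l z Hl ltac:(lra)).
  set (W := Rpower w l) in *.
  assert (HWp : 0 < W) by apply exp_pos.
  assert (HiW : / W = W * Rpower z l).
  { unfold W, z, Rpower. rewrite ln_Rinv by nra. rewrite ln_mult by lra.
    rewrite <- exp_plus, <- exp_Ropp. f_equal. ring. }
  rewrite Hcq, HW. rewrite HiW.
  assert (W * (2 - Rpower z l) <= W * Rpower (2 - z) l).
  { apply Rmult_le_compat_l; lra. }
  lra.
Qed.

Lemma h_gt1 x : 0 < x -> 1 < sinh x / x.
Proof.
  intros Hx. assert (Hs := ineq_I7 x Hx). assert (0 < x ^ 3) by (apply pow_lt; lra).
  apply (Rmult_lt_reg_r x); auto. unfold Rdiv. rewrite Rmult_assoc, Rinv_l by lra. lra.
Qed.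

Lemma cosh_pos' x : 0 < cosh x.
Proof. generalize (cosh_ge1 x); lra. Qed.

Lemma sinh_lt_cosh x : sinh x < cosh x.
Proof. unfold sinh, cosh. generalize (exp_pos (- x)). lra. Qed.

Lemma pos_2w r h : 0 < r -> 1 <= h -> 0 < 2 * Rpower h r - / Rpower h r.
Proof.
  intros Hr Hh. assert (0 <= ln h) by (apply ln_pos'; auto).
  assert (Hw : 1 <= Rpower h r) by (unfold Rpower; rewrite <- exp_0; apply exp_le'; nra).
  assert (/ Rpower h r <= 1) by (rewrite <- Rinv_1; apply Rinv_le_contravar; lra). lra.
Qed.

Theorem corollary4p8 (alpha beta : R) :
  (forall x : R, 0 < x ->
     H alpha (cosh x) < sinh x / x /\ sinh x / x < H beta (cosh x))
  <-> (alpha <= 0 /\ 3/5 <= beta).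
Proof.
  split.
  - intros Hall. split.
    + destruct (Rle_or_lt alpha 0) as [Ha|Ha]; auto. exfalso.
      set (x0 := Rpower 2 (1/alpha)).
      assert (Hx0 : 0 < x0) by apply exp_pos.
      destruct (Hall x0 Hx0) as [H1 _].
      assert (Hge := Halpha_ge alpha (cosh x0) Ha (cosh_pos' x0)). fold x0 in Hge.
      assert (H3 : sinh x0 / x0 < cosh x0 / x0).
      { apply Rmult_lt_compat_r. apply Rinv_0_lt_compat; auto. apply sinh_lt_cosh. }
      lra.
    + destruct (Rle_or_lt (3/5) beta) as [Hb|Hb]; auto. exfalso.
      destruct (Rle_or_lt beta 0) as [Hb0|Hb0].
      * destruct (Hall 1 Rlt_0_1) as [_ H2].
        assert (Hl := lazarevic 1 Rlt_0_1).
        assert (H3 : H beta (cosh 1) <= Rpower (cosh 1) (1/3)).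
        { destruct (Rle_lt_or_eq_dec _ _ Hb0) as [Hlt|Heq].
          - apply Hneg_le; auto. apply cosh_pos'.
          - subst. rewrite H_0. lra. }
        lra.
      * destruct (core_N2 beta (conj Hb0 Hb)) as [x [Hx HK]].
        rewrite Kf_form in HK by auto.
        assert (Hh := h_gt1 x Hx).
        assert (Hq := pos_2w beta (sinh x / x) Hb0 ltac:(lra)).
        assert (Ha : 0 < Rpower (cosh x) beta) by apply exp_pos.
        assert (H0 : Rpower (cosh x) beta < 2 * Rpower (sinh x / x) beta - / Rpower (sinh x / x) beta).
        { apply ln_lt_inv; auto. lra. }
        apply (gt_H beta (cosh x) (sinh x / x) Hb0 (cosh_pos' x) ltac:(lra)) in H0.
        destruct (Hall x Hx) as [_ H2]. lra.
  - intros [Ha Hb] x Hx.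
    assert (Hh := h_gt1 x Hx).
    assert (Hl := lazarevic x Hx).
    split.
    + destruct (Rle_lt_or_eq_dec _ _ Ha) as [Hlt|Heq].
      * assert (Hn := Hneg_le alpha (cosh x) Hlt (cosh_pos' x)). lra.
      * subst. rewrite H_0. auto.
    + assert (HK := core_S3 x Hx).
      rewrite Kf_form in HK by lra.
      assert (Hq := pos_2w (3/5) (sinh x / x) ltac:(lra) ltac:(lra)).
      assert (Ha' : 0 < Rpower (cosh x) (3/5)) by apply exp_pos.
      assert (Hp : 2 * Rpower (sinh x / x) (3/5) - / Rpower (sinh x / x) (3/5) < Rpower (cosh x) (3/5)).
      { apply ln_lt_inv; auto. lra. }
      apply (mono_step (3/5) beta (sinh x / x) (cosh x)) in Hp; [|lra|lra|apply cosh_pos'].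
      apply (lt_H beta (cosh x) (sinh x / x)); auto. lra. apply cosh_pos'. lra.
Qed.
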